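(* Let $W=x_1^{a_1}x_2+x_2^{a_2}x_3+\dots+x_{N-1}^{a_{N-1}}x_N+x_N^{a_N}$ be a chain with all $a_i\ge2$ and $a_N>2$. For $1\le i\le N$ and an integer $c\in[-2,2]$ put $Y_{i,c}=q_i+c\,\rho^{(i)}_N$. Then $Y_{i,c}\in(0,1)$ except in the following cases: $Y_{N,-2}\in(-1,0)$; $Y_{N,-1}=0$; and, when $a_N=3$, $Y_{N-1,2}=0$ and $Y_{N,2}=1$.
   Context: $q_i$ is the weight of $x_i$ in $W$ and $\rho^{(i)}_j$ is the $(i,j)$ entry of $E_W^{-1}$, where $E_W$ is the exponent matrix (upper bidiagonal with diagonal $a_1,\dots,a_N$ and superdiagonal entries $1$). Explicitly $\rho^{(i)}_j=(-1)^{j-i}\prod_{k=i}^j a_k^{-1}$ for $j\ge i$, $0$ for $j<i$, and $q_i=\sum_{j=i}^N(-1)^{j-i}\prod_{k=i}^ja_k^{-1}$. *)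

(* Defs.v *)
(* Indices are 1-based naturals 1..N; exponents a : nat -> nat. *)
From HB Require Import structures.
From mathcomp Require Import all_boot all_order all_algebra.
Set Implicit Arguments. Unset Strict Implicit. Unset Printing Implicit Defensive.
Import Order.TTheory GRing.Theory Num.Theory.
Local Open Scope ring_scope.

(* rho^{(i)}_j = (i,j) entry of E_W^{-1}:
   (-1)^(j-i) * prod_{k=i}^{j} a_k^{-1} for j >= i, and 0 for j < i. *)
Definition rho (a : nat -> nat) (i j : nat) : rat :=
  if (i <= j)%N then (-1) ^+ (j - i) * \prod_(i <= k < j.+1) ((a k)%:R)^-1
  else 0.

(* q_i = weight of x_i in W = sum_{j=i}^{N} rho^{(i)}_j. *)
Definition qw (a : nat -> nat) (N i : nat) : rat :=
  \sum_(i <= j < N.+1) rho a i j.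

Definition Y (a : nat -> nat) (N i : nat) (c : int) : rat :=
  qw a N i + c%:~R * rho a i N.

(* Main.v *)
Require Import Defs.
From HB Require Import structures.
From mathcomp Require Import all_boot all_order all_algebra.
From mathcomp Require Import zify ring lra.
Import Order.TTheory GRing.Theory Num.Theory.
Local Open Scope ring_scope.

Lemma rho_rec a i j : (i < j)%N -> rho a i j = - ((a i)%:R^-1) * rho a i.+1 j.
Proof.
move=> hij; rewrite /rho hij ltnW //.
rewrite big_ltn; last by rewrite ltnS ltnW.
have -> : (j - i = (j - i.+1).+1)%N by lia.
rewrite exprS; ring.
Qed.

Lemma rho_diag a i : rho a i i = (a i)%:R^-1.
Proof. by rewrite /rho leqnn subnn expr0 mul1r big_nat1. Qed.

Lemma qw_rec a N i : (i < N)%N -> qw a N i = (a i)%:R^-1 * (1 - qw a N i.+1).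
Proof.
move=> hi; rewrite /qw big_ltn; last by rewrite ltnS ltnW.
rewrite rho_diag mulrBr mulr1; congr (_ + _).
rewrite big_distrr /= -sumrN big_nat [RHS]big_nat; apply: eq_bigr => j /andP[hj _].
by rewrite rho_rec // mulNr.
Qed.

Lemma Y_rec a N i c : (i < N)%N -> Y a N i c = (1 - Y a N i.+1 c) / (a i)%:R.
Proof.
move=> hi; rewrite /Y qw_rec // rho_rec //; ring.
Qed.

Lemma Y_N a N c : Y a N N c = (1 + c%:~R) / (a N)%:R.
Proof. rewrite /Y /qw big_nat1 rho_diag; ring. Qed.

Lemma down N a (ha : forall k, (1 <= k <= N)%N -> (2 <= a k)%N) c M :
  (M <= N)%N -> -1 < Y a N M c < 1 ->
  forall d i, (1 <= i)%N -> (i + d.+1 = M)%N -> 0 < Y a N i c < 1.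
Proof.
move=> hM hY; elim=> [|d IH] i hi hid.
- have hiN : (i < N)%N by lia.
  have := ha i; rewrite hi /= => /(_ (ltnW hiN)) h2.
  have hA : (2:rat) <= (a i)%:R by rewrite (ler_nat _ 2).
  have e : i.+1 = M by lia.
  rewrite Y_rec // e; move: hY => /andP[h1 h3].
  have hA0 : (0:rat) < (a i)%:R by lra.
  apply/andP; split; first by apply: divr_gt0; lra.
  rewrite ltr_pdivrMr //; lra.
- have hiN : (i < N)%N by lia.
  have := ha i; rewrite hi /= => /(_ (ltnW hiN)) h2.
  have hA : (2:rat) <= (a i)%:R by rewrite (ler_nat _ 2).
  have /andP[h1 h3] := IH i.+1 (leqW hi) (ltac:(lia)).
  rewrite Y_rec //.
  have hA0 : (0:rat) < (a i)%:R by lra.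
  apply/andP; split; first by apply: divr_gt0; lra.
  rewrite ltr_pdivrMr //; lra.
Qed.

Theorem lemma5p3 (N : nat) (a : nat -> nat)
  (hN : (1 <= N)%N)
  (ha : forall k, (1 <= k <= N)%N -> (2 <= a k)%N)
  (haN : (2 < a N)%N) :
  forall (i : nat) (c : int), (1 <= i <= N)%N -> -2 <= c <= 2 ->
    [/\ (i = N /\ c = -2 -> -1 < Y a N i c < 0),
        (i = N /\ c = -1 -> Y a N i c = 0),
        (a N = 3%N /\ i = N.-1 /\ c = 2 -> Y a N i c = 0),
        (a N = 3%N /\ i = N /\ c = 2 -> Y a N i c = 1) &
        (~ (i = N /\ (c = -2 \/ c = -1)) ->
         ~ (a N = 3%N /\ (i = N.-1 \/ i = N) /\ c = 2) ->
         0 < Y a N i c < 1)].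
Proof.
move=> i c /andP[hi1 hiN] hc.
have hA : (3:rat) <= (a N)%:R by rewrite (ler_nat _ 3).
have hA0 : (0:rat) < (a N)%:R by lra.
have hc5 : c = -2 \/ c = -1 \/ c = 0 \/ c = 1 \/ c = 2 by move: hc; lia.
have hYN1 : a N = 3%N -> Y a N N 2 = 1.
  by move=> e; rewrite Y_N e /=; field.
have hYN2 : a N = 3%N -> (1 < N)%N -> Y a N N.-1 2 = 0.
  move=> e h; rewrite Y_rec; last by lia.
  by rewrite prednK ?hYN1 // ?subrr ?mul0r //; lia.
split.
- move=> [-> ->]; rewrite Y_N.
  have -> : 1 + (-2 : int)%:~R = -1 :> rat by rewrite /=; lra.
  apply/andP; split.
    rewrite ltr_pdivlMr //; lra.
  rewrite ltr_pdivrMr //; lra.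
- move=> [-> ->]; rewrite Y_N.
  have -> : 1 + (-1 : int)%:~R = 0 :> rat by rewrite /=; lra.
  by rewrite mul0r.
- move=> [e [ei ->]]; rewrite ei; apply: hYN2 => //; move: hi1; rewrite ei; by case: (N) => [|[|n]].
- by move=> [e [-> ->]]; apply: hYN1.
move=> n1 n2.
have hYN : ~ (a N = 3%N /\ c = 2) -> -1 < Y a N N c < 1.
  move=> hne; rewrite Y_N.
  case: hc5 => [->|[->|[->|[->|ec]]]].
  + apply/andP; split; first (rewrite ltr_pdivlMr //; rewrite /=; lra).
    rewrite ltr_pdivrMr //; rewrite /=; lra.
  + apply/andP; split; first (rewrite ltr_pdivlMr //; rewrite /=; lra).
    rewrite ltr_pdivrMr //; rewrite /=; lra.
  + apply/andP; split; first (rewrite ltr_pdivlMr //; rewrite /=; lra).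
    rewrite ltr_pdivrMr //; rewrite /=; lra.
  + apply/andP; split; first (rewrite ltr_pdivlMr //; rewrite /=; lra).
    rewrite ltr_pdivrMr //; rewrite /=; lra.
  + have hA4 : (4:rat) <= (a N)%:R.
      rewrite (ler_nat _ 4); case: (a N =P 3%N) haN => [e|ne] h; first by exfalso; apply: hne.
      lia.
    rewrite ec.
    apply/andP; split; first (rewrite ltr_pdivlMr //; rewrite /=; lra).
    rewrite ltr_pdivrMr //; rewrite /=; lra.
case: (ltngtP i N) hiN => // hlt _; last first.
  subst i; have hne : ~ (a N = 3%N /\ c = 2) by move=> [e1 e2]; apply: n2; split=> //; split=> //; right.
  have := hYN hne; case: hc5 => [e|[e|[->|[->|->]]]];
    try by (exfalso; apply: n1; split => //; tauto).
  + rewrite Y_N /= => _; apply/andP; split; first by apply: divr_gt0; lra.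
    rewrite ltr_pdivrMr //; lra.
  + rewrite Y_N /= => _; apply/andP; split; first by apply: divr_gt0; lra.
    rewrite ltr_pdivrMr //; lra.
  + rewrite Y_N /= => /andP[_ h]; apply/andP; split; first by apply: divr_gt0; lra.
    exact: h.
case: (boolP ((a N == 3%N) && (c == 2))) => [/andP[/eqP e1 /eqP e2]|hne].
- have hi2 : (i + (N.-1 - i).-1.+1 = N.-1)%N.
    have : i <> N.-1 by move=> ei; apply: n2; split=> //; split=> //; left.
    lia.
  have hN2 : (1 < N)%N.
    have : i <> N.-1 by move=> ei; apply: n2; split=> //; split=> //; left.
    lia.
  apply: (@down N a ha c N.-1 _ _ _ i hi1 hi2); first lia.
  by rewrite e2 hYN2.
  apply: (@down N a ha c N _ _ (N - i).-1 i hi1); [done | | by rewrite -subn1; lia].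
  apply: hYN => -[e1 e2]; move: hne; rewrite e1 e2; done.
Qed.
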